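(* Let $p\in\mathbb{Z}[x_1,x_2,x_3,x_4,x_5,x_6]$. If $p(\sin\alpha_1,\sin\alpha_2,\sin\alpha_3,\cos\alpha_1,\cos\alpha_2,\cos\alpha_3)=0$ holds for the interior angles $\alpha_1,\alpha_2,\alpha_3$ of some generic Euclidean triangle, then it holds for the interior angles of every Euclidean triangle.
   Context: A Euclidean triangle with edge lengths $\ell_1,\ell_2,\ell_3$ is generic if for some real $k>0$ the numbers $k\ell_1,k\ell_2,k\ell_3$ are algebraically independent over $\mathbb{Q}$ (no nonzero integer polynomial in three variables vanishes on them). The angle $\alpha_i$ is the interior angle opposite the edge of length $\ell_i$. *)

(* Defs.v *)
From HB Require Import structures.
From mathcomp Require Import all_boot all_order all_algebra.
From mathcomp Require Import mpoly.
From mathcomp Require Import all_classical all_reals all_analysis.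
Set Implicit Arguments. Unset Strict Implicit. Unset Printing Implicit Defensive.
Import Order.TTheory GRing.Theory Num.Theory.
Local Open Scope ring_scope.

Definition zeval (R : realType) (n : nat) (p : {mpoly int[n]}) (v : 'I_n -> R) : R :=
  mmap (fun z : int => z%:~R) v p.

Definition pt3 (R : realType) (a0 a1 a2 : R) : 'I_3 -> R :=
  fun i => nth 0 [:: a0; a1; a2] i.

Definition pt6 (R : realType) (a0 a1 a2 a3 a4 a5 : R) : 'I_6 -> R :=
  fun i => nth 0 [:: a0; a1; a2; a3; a4; a5] i.

Definition is_triangle (R : realType) (l1 l2 l3 : R) : Prop :=
  [/\ 0 < l1, 0 < l2, 0 < l3 & [/\ l1 < l2 + l3, l2 < l1 + l3 & l3 < l1 + l2]].

(* Algebraic independence over Q (equivalently over Z) of a0 a1 a2. *)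
Definition alg_indep3 (R : realType) (a0 a1 a2 : R) : Prop :=
  forall q : {mpoly int[3]}, q != 0 -> zeval q (pt3 a0 a1 a2) != 0.

Definition generic_triangle (R : realType) (l1 l2 l3 : R) : Prop :=
  is_triangle l1 l2 l3 /\ exists k : R, 0 < k /\ alg_indep3 (k * l1) (k * l2) (k * l3).

(* Interior angle opposite the side of length a, the other sides being b, c
   (law of cosines). *)
Definition opp_angle (R : realType) (a b c : R) : R :=
  acos ((b ^+ 2 + c ^+ 2 - a ^+ 2) / (2 * b * c)).

Definition angle_point (R : realType) (l1 l2 l3 : R) : 'I_6 -> R :=
  let a1 := opp_angle l1 l2 l3 in
  let a2 := opp_angle l2 l1 l3 in
  let a3 := opp_angle l3 l1 l2 in
  pt6 (sin a1) (sin a2) (sin a3) (cos a1) (cos a2) (cos a3).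

(* Main.v *)
Require Import Defs.
From HB Require Import structures.
From mathcomp Require Import all_boot all_order all_algebra.
From mathcomp Require Import mpoly.
From mathcomp Require Import all_classical all_reals all_analysis.
From mathcomp Require Import ring.
Import Order.TTheory GRing.Theory Num.Theory.
Local Open Scope ring_scope.

Lemma mmapXi (n : nat) (S : comNzRingType) (h : 'I_n -> S) (i : 'I_n) :
  mmap (fun z : int => z%:~R) h ('X_i : {mpoly int[n]}) = h i.
Proof. by rewrite mmapX mmap1U. Qed.

Section Trig.
Variable R : realType.

Definition Hr (a b c : R) := (a+b+c)*(-a+b+c)*(a-b+c)*(a+b-c).

Lemma trig_opp (a b c : R) : 0 < b -> 0 < c -> 0 <= Hr a b c ->
  cos (opp_angle a b c) = (b ^+ 2 + c ^+ 2 - a ^+ 2) / (2 * b * c) /\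
  sin (opp_angle a b c) = Num.sqrt (Hr a b c) / (2 * b * c).
Proof.
move=> b0 c0 H0; set x := (b ^+ 2 + c ^+ 2 - a ^+ 2) / (2 * b * c).
have bc0 : 2 * b * c != 0 by rewrite !mulf_neq0 ?gt_eqF.
have e : 1 - x ^+ 2 = (Num.sqrt (Hr a b c) / (2 * b * c)) ^+ 2.
  rewrite [RHS]expr_div_n sqr_sqrtr // /x /Hr. field. by rewrite !gt_eqF.
have x1 : -1 <= x <= 1.
  have : 0 <= 1 - x ^+ 2 by rewrite e sqr_ge0.
  rewrite subr_ge0 => h; rewrite -ler_norml -(@expr_le1 _ 2) // -normrX.
  by rewrite ger0_norm // sqr_ge0.
split; first by rewrite /opp_angle acosK // in_itv.
rewrite /opp_angle sin_acos // e sqrtr_sqr ger0_norm //.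
by rewrite divr_ge0 ?sqrtr_ge0 // !mulr_ge0 // ltW.
Qed.

Definition numr (x1 x2 x3 : R) (i : 'I_6) : R :=
  nth 0 [:: x1; x2; x3; x1 * (x2^+2 + x3^+2 - x1^+2);
             x2 * (x1^+2 + x3^+2 - x2^+2); x3 * (x1^+2 + x2^+2 - x3^+2)] i.
Definition sfac (S : R) (i : 'I_6) : R := if (i < 3)%N then S else 1.

Lemma Hr_pos (x1 x2 x3 : R) : is_triangle x1 x2 x3 -> 0 < Hr x1 x2 x3.
Proof.
case=> h1 h2 h3 [t1 t2 t3]; rewrite /Hr.
have a1 : 0 < x1 + x2 + x3 by rewrite !addr_gt0.
have a2 : 0 < - x1 + x2 + x3.
  have : 0 < (x2 + x3) - x1 by rewrite subr_gt0.
  by rewrite addrC addrA.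
have a3 : 0 < x1 - x2 + x3.
  have : 0 < (x1 + x3) - x2 by rewrite subr_gt0.
  by rewrite -addrA [x3 - x2]addrC addrA.
have a4 : 0 < x1 + x2 - x3 by rewrite subr_gt0.
by rewrite !mulr_gt0.
Qed.

Lemma angle_val (x1 x2 x3 : R) (i : 'I_6) : is_triangle x1 x2 x3 ->
  angle_point x1 x2 x3 i =
  numr x1 x2 x3 i * sfac (Num.sqrt (Hr x1 x2 x3)) i / (2 * x1 * x2 * x3).
Proof.
move=> T; have HP := @Hr_pos _ _ _ T; have := T; case=> h1 h2 h3 _.
have e2 : Hr x2 x1 x3 = Hr x1 x2 x3 by rewrite /Hr; ring.
have e3 : Hr x3 x1 x2 = Hr x1 x2 x3 by rewrite /Hr; ring.
have [c1 s1] := @trig_opp x1 x2 x3 h2 h3 (ltW HP).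
have [c2 s2] := @trig_opp x2 x1 x3 h1 h3 ltac:(by rewrite e2 ltW).
have [c3 s3] := @trig_opp x3 x1 x2 h1 h2 ltac:(by rewrite e3 ltW).
rewrite e2 in s2; rewrite e3 in s3.
rewrite /angle_point /pt6 /numr /sfac.
have n1 : x1 != 0 by rewrite gt_eqF.
have n2 : x2 != 0 by rewrite gt_eqF.
have n3 : x3 != 0 by rewrite gt_eqF.
case: i => [[|[|[|[|[|[|k]]]]]] Hk] //=;
 rewrite ?c1 ?s1 ?c2 ?s2 ?c3 ?s3; try field; try by rewrite n1 n2 n3.
Qed.
End Trig.

Definition Xm (i : nat) : {mpoly int[3]} := 'X_(inord i).
Definition Npol (a b c : {mpoly int[3]}) := b ^+ 2 + c ^+ 2 - a ^+ 2.
Definition nump (i : 'I_6) : {mpoly int[3]} :=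
  nth 0 [:: Xm 0; Xm 1; Xm 2; Xm 0 * Npol (Xm 0) (Xm 1) (Xm 2);
             Xm 1 * Npol (Xm 1) (Xm 0) (Xm 2); Xm 2 * Npol (Xm 2) (Xm 0) (Xm 1)] i.
Definition Hp : {mpoly int[3]} :=
  (Xm 0 + Xm 1 + Xm 2) * (- Xm 0 + Xm 1 + Xm 2) * (Xm 0 - Xm 1 + Xm 2) * (Xm 0 + Xm 1 - Xm 2).
Definition Dp : {mpoly int[3]} := 2 * Xm 0 * Xm 1 * Xm 2.
Definition je (e : 'X_{1..6}) : nat := (\sum_(i < 6 | (i < 3)%N) e i)%N.
Definition Re (d : nat) (e : 'X_{1..6}) : {mpoly int[3]} :=
  (\prod_(i < 6) nump i ^+ e i) * Dp ^+ (d - mdeg e).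
Definition Apol (p : {mpoly int[6]}) : {mpoly int[3]} :=
  \sum_(e <- msupp p) (p@_e)%:~R *
     (if odd (je e) then 0 else Re (msize p) e * Hp ^+ (je e)./2).
Definition Bpol (p : {mpoly int[6]}) : {mpoly int[3]} :=
  \sum_(e <- msupp p) (p@_e)%:~R *
     (if odd (je e) then Re (msize p) e * Hp ^+ (je e)./2 else 0).

Section Eval.
Variable R : realType.
Variables x1 x2 x3 : R.
Local Notation ev := (mmap (fun z : int => z%:~R) (pt3 x1 x2 x3)).

Lemma ev_Xm0 : ev (Xm 0) = x1. Proof. by rewrite mmapXi /pt3 inordK. Qed.
Lemma ev_Xm1 : ev (Xm 1) = x2. Proof. by rewrite mmapXi /pt3 inordK. Qed.
Lemma ev_Xm2 : ev (Xm 2) = x3. Proof. by rewrite mmapXi /pt3 inordK. Qed.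

Lemma ev_nump i : ev (nump i) = @numr _ x1 x2 x3 i.
Proof.
rewrite /nump /numr /Npol.
case: i => [[|[|[|[|[|[|k]]]]]] Hk] //=;
  rewrite ?rmorph0 ?rmorphM ?rmorphB ?rmorphD ?rmorphXn /= ?ev_Xm0 ?ev_Xm1 ?ev_Xm2 //. 
Qed.

Lemma ev_Hp : ev Hp = @Hr _ x1 x2 x3.
Proof.
by rewrite /Hp /Hr !rmorphM !rmorphB !rmorphD !rmorphN /= ?ev_Xm0 ?ev_Xm1 ?ev_Xm2.
Qed.

Lemma ev_Dp : ev Dp = 2 * x1 * x2 * x3.
Proof. by rewrite /Dp !rmorphM rmorph_nat /= ?ev_Xm0 ?ev_Xm1 ?ev_Xm2. Qed.

Lemma term_eq (d : nat) (e : 'X_{1..6}) : is_triangle x1 x2 x3 -> (mdeg e <= d)%N ->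
  ev (Re d e) * Num.sqrt (@Hr _ x1 x2 x3) ^+ je e =
  (2 * x1 * x2 * x3) ^+ d * mmap1 (angle_point x1 x2 x3) e.
Proof.
move=> T le; set S := Num.sqrt _; set D := 2 * x1 * x2 * x3.
have := T; case=> h1 h2 h3 _.
have D0 : D != 0 by rewrite /D !mulf_neq0 ?gt_eqF.
rewrite /Re rmorphM rmorph_prod /= rmorphXn /= ev_Dp -/D.
rewrite /mmap1 [in RHS](eq_bigr (fun i => (@numr _ x1 x2 x3 i ^+ e i * @sfac _ S i ^+ e i) * D^-1 ^+ e i)); last first.
  by move=> i _; rewrite angle_val // -!exprMn.
rewrite !big_split /= prodrXr -mdegE.
under [in LHS]eq_bigr => i _ do rewrite rmorphXn /= ev_nump.
under [X in _ = _ * (_ * X * _)]eq_bigr => i _ do rewrite /sfac (fun_if (fun x => x ^+ e i)) expr1n.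
rewrite -big_mkcond prodrXr -/(je e).
rewrite -(subnK le) exprD exprVn.
have Dm : D ^+ mdeg e != 0 by rewrite expf_neq0.
rewrite addnK; set P := \prod_(i < 6) _; set U := D ^+ mdeg e.
by field.
Qed.

Lemma key (p : {mpoly int[6]}) : is_triangle x1 x2 x3 ->
  ev (Apol p) + Num.sqrt (@Hr _ x1 x2 x3) * ev (Bpol p) =
  (2 * x1 * x2 * x3) ^+ msize p * zeval p (angle_point x1 x2 x3).
Proof.
move=> T; set S := Num.sqrt _.
have sq : @Hr _ x1 x2 x3 = S ^+ 2 by rewrite sqr_sqrtr // ltW // Hr_pos.
rewrite /Apol /Bpol !rmorph_sum /= mulr_sumr -big_split /=.
have zE : zeval p (angle_point x1 x2 x3) =
  \sum_(m <- msupp p) (p@_m)%:~R * mmap1 (angle_point x1 x2 x3) m by [].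
rewrite zE mulr_sumr !big_seq; apply: eq_bigr => e He.
have le := ltnW (msize_mdeg_lt He).
rewrite mulrCA -(term_eq _ _ T le) !rmorphM /= rmorph_int.
rewrite -[in RHS](odd_double_half (je e)) -mul2n exprD exprM -sq.
case: ifP => Ho; rewrite rmorph0 ?rmorphM ?rmorphXn /= ev_Hp -/S.
  by rewrite mulr0 add0r expr1 mulrCA; congr (_ * _); rewrite mulrCA.
by rewrite !mulr0 addr0 expr0 mul1r.
Qed.
End Eval.

Section Univ.
Variable R : realType.
Variables m2 m3 : R.
Definition wv (i : 'I_3) : {poly R} := nth 0 [:: 'X; m2%:P; m3%:P] i.
Local Notation phi := (mmap (fun z : int => z%:~R) wv).

Lemma ev_horner (t : R) (r : {mpoly int[3]}) :
  mmap (fun z : int => z%:~R) (pt3 t m2 m3) r = (phi r).[t].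
Proof.
rewrite /mmap -horner_evalE rmorph_sum /=; apply: eq_bigr => e _.
rewrite rmorphM /= horner_evalE horner_int; congr (_ * _).
rewrite /mmap1 rmorph_prod /=; apply: eq_bigr => i _.
rewrite rmorphXn /= horner_evalE; congr (_ ^+ _).
by case: i => [[|[|[|k]]] Hk] //=; rewrite ?hornerX ?hornerC.
Qed.

Lemma phi_Hp_lead : lead_coef (phi Hp) = -1.
Proof.
have e0 : phi (Xm 0) = 'X by rewrite mmapXi /wv inordK.
have e1 : phi (Xm 1) = m2%:P by rewrite mmapXi /wv inordK.
have e2 : phi (Xm 2) = m3%:P by rewrite mmapXi /wv inordK.
have -> : phi Hp = - (('X + (m2+m3)%:P) * ('X - (m2+m3)%:P) * ('X + (m3-m2)%:P) * ('X + (m2-m3)%:P)).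
  rewrite /Hp !rmorphM !rmorphB !rmorphD !rmorphN /= e0 e1 e2 !raddfD ?raddfB ?raddfN /=.
  move: ('X : {poly R}) (m2%:P) (m3%:P) => X a b; ring.
by rewrite lead_coefN !lead_coefM lead_coefXsubC !lead_coefXaddC !mul1r.
Qed.

Lemma B_vanish (A B : {mpoly int[3]}) : A ^+ 2 - Hp * B ^+ 2 = 0 ->
  forall t : R, mmap (fun z : int => z%:~R) (pt3 t m2 m3) B = 0.
Proof.
move=> q0 t; rewrite ev_horner.
have : phi (A ^+ 2 - Hp * B ^+ 2) = 0 by rewrite q0 rmorph0.
rewrite rmorphB !rmorphXn rmorphM rmorphXn /= => /eqP; rewrite subr_eq0 => /eqP E.
have := congr1 lead_coef E; rewrite !lead_coefM phi_Hp_lead => L.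
have : lead_coef (phi B) ^+ 2 == 0.
  have : lead_coef (phi A) ^+ 2 + lead_coef (phi B) ^+ 2 == 0.
    by rewrite !expr2 L mulN1r addNr.
  by rewrite paddr_eq0 ?sqr_ge0 // => /andP [].
rewrite sqrf_eq0 => /eqP.
by move/eqP; rewrite lead_coef_eq0 => /eqP ->; rewrite horner0.
Qed.
End Univ.

Lemma opp_angle_scale (R : realType) (k a b c : R) : 0 < k -> 0 < b -> 0 < c ->
  opp_angle (k * a) (k * b) (k * c) = opp_angle a b c.
Proof.
move=> k0 b0 c0; rewrite /opp_angle; congr acos.
have kn : k != 0 by rewrite gt_eqF. have bn : b != 0 by rewrite gt_eqF.
have cn : c != 0 by rewrite gt_eqF.
by field; rewrite kn bn cn.
Qed.

Theorem lemma2p3 (R : realType) (p : {mpoly int[6]}) :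
  (exists l1 l2 l3 : R, generic_triangle l1 l2 l3 /\ zeval p (angle_point l1 l2 l3) = 0) ->
  forall m1 m2 m3 : R, is_triangle m1 m2 m3 -> zeval p (angle_point m1 m2 m3) = 0.
Proof.
case=> l1 [l2 [l3 [[Tl [k [k0 Ind]]] Hz]]] m1 m2 m3 Tm.
have := Tl; case=> h1 h2 h3 [t1 t2 t3].
have Tk : is_triangle (k * l1) (k * l2) (k * l3).
  split; rewrite ?mulr_gt0 //; split; by rewrite -mulrDr ltr_pM2l.
have Ak : angle_point (k * l1) (k * l2) (k * l3) = angle_point l1 l2 l3.
  by rewrite /angle_point !opp_angle_scale.
set q := Apol p ^+ 2 - Hp * Bpol p ^+ 2.
have evq : forall x1 x2 x3 : R, is_triangle x1 x2 x3 ->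
   mmap (fun z : int => z%:~R) (pt3 x1 x2 x3) q =
   (2 * x1 * x2 * x3) ^+ msize p * zeval p (angle_point x1 x2 x3) *
   (mmap (fun z : int => z%:~R) (pt3 x1 x2 x3) (Apol p) -
    Num.sqrt (@Hr _ x1 x2 x3) * mmap (fun z : int => z%:~R) (pt3 x1 x2 x3) (Bpol p)).
  move=> x1 x2 x3 T; rewrite -key //.
  have sq : @Hr _ x1 x2 x3 = Num.sqrt (@Hr _ x1 x2 x3) ^+ 2 by rewrite sqr_sqrtr // ltW // Hr_pos.
  rewrite /q rmorphB !rmorphXn rmorphM rmorphXn /= ev_Hp.
  set S := Num.sqrt _; rewrite -/S in sq; rewrite sq.
  by rewrite -exprMn subr_sqr mulrC.
have q0 : q = 0.
  apply/eqP; apply: contraT => /Ind; rewrite /zeval.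
  by rewrite evq // Ak Hz mulr0 mul0r eqxx.
have B0 := @B_vanish R m2 m3 _ _ q0 m1.
have A0 : mmap (fun z : int => z%:~R) (pt3 m1 m2 m3) (Apol p) = 0.
  have : mmap (fun z : int => z%:~R) (pt3 m1 m2 m3) q = 0 by rewrite q0 rmorph0.
  rewrite /q rmorphB !rmorphXn rmorphM rmorphXn /= B0 expr0n /= mulr0 subr0.
  by move/eqP; rewrite sqrf_eq0 => /eqP.
have := @key R m1 m2 m3 p Tm; rewrite A0 B0 mulr0 addr0 => /esym/eqP.
rewrite mulf_eq0 expf_eq0 => /orP [/andP [_ /eqP D0]|/eqP //].
have := Tm; case=> g1 g2 g3 _.
by exfalso; move: D0; apply/eqP; rewrite !mulf_neq0 ?gt_eqF.
Qed.
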